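(* Let $\Omega$ be a topological space, $X$ a locally convex topological vector space over $\mathbb{C}$, $v \in F(\Omega, \mathbb{R}_+)$ and $f \in F(\Omega, X)$ such that $vf$ (respectively $f$) is continuous on $\mathrm{supp}\, v$. Let $A \subset C(\Omega, [0, 1])$, or let $A$ be a self-adjoint subalgebra of $C(\Omega, \mathbb{C})$ such that every $\varphi\in A$ is bounded on $\mathrm{supp}\,v$. If $A$ separates disjoint Lebesgue sets of $vf$ (respectively $f$) in $\mathrm{supp}\, v$, then $A$ $\beta$-separates disjoint Lebesgue sets of $vf$ (respectively $f$) in $\mathrm{supp}\, v$.
   Context: $vf(x)=v(x)f(x)$; $\mathrm{supp}\,v$ is the closure of $\{v\neq0\}$; $X^*$ is the space of continuous linear functionals $X\to\mathbb{C}$. For $h\in F(\Omega,X)$, $S\subset\Omega$, $e^*\in X^*$, $a<b$: $L_a=\{x\in S:\Re e^*(h(x))\le a\}$, $L^b=\{x\in S:\Re e^*(h(x))\ge b\}$. ''$A$ separates disjoint Lebesgue sets of $h$ in $S$'' means: for all $e^*\in X^*$ and $a<b$ there is $\varphi\in A$ with $\overline{\varphi(L_a)}\cap\overline{\varphi(L^b)}=\emptyset$ (with $\varphi(\emptyset)=\emptyset$). A zero-set is $h^{-1}(0)$ with $h\in C(\Omega,\mathbb{R})$; a $z$-filter is a nonempty family $\mathcal{F}$ of zero-sets with $\emptyset\notin\mathcal{F}$, closed under finite intersections and under passing to larger zero-sets. $\mathcal{F}$ is $(A,v)$-antisymmetric if every $F\in\mathcal{F}$ meets $\mathrm{supp}\,v$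 and, for each $\phi\in A$ with $\bigcap_{F\in\mathcal{F}}\overline{\phi(F\cap\mathrm{supp}\,v)}\subset[0,1]$ (closures in $\mathbb{C}\cup\{\infty\}$), this intersection is a single point. ''$A$ $\beta$-separates disjoint Lebesgue sets of $h$ in $\mathrm{supp}\,v$'' means: for any $(A,v)$-antisymmetric $z$-filter $\mathcal{F}$, any $e^*\in X^*$ and $a<b$, there is $F\in\mathcal{F}$ with $F\cap L_a=\emptyset$ or $F\cap L^b=\emptyset$, the Lebesgue sets being taken in $S=\mathrm{supp}\,v$. *)

(* Defs.v *)
From HB Require Import structures.
From mathcomp Require Import all_boot all_order all_algebra.
From mathcomp Require Import all_classical all_reals all_analysis.
From mathcomp.real_closed Require Import complex.
Import Order.TTheory GRing.Theory Num.Theory.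
Import numFieldNormedType.Exports.
Set Implicit Arguments. Unset Strict Implicit. Unset Printing Implicit Defensive.
Local Open Scope classical_set_scope.
Local Open Scope ring_scope.

(* The complex numbers are R[i]; R[i]^o carries the (norm = modulus) topology. *)

Section Defs.
Context {R : realType} {Omega : topologicalType}.

Definition Ccontinuous (phi : Omega -> R[i]) : Prop :=
  continuous (phi : Omega -> R[i]^o).

Definition closC (S : set R[i]) : set R[i]^o := closure (S : set R[i]^o).

Definition closCinf (S : set R[i]) : set (one_point_compactification R[i]^o) :=
  @closure (one_point_compactification R[i]^o)
    ((fun z : R[i]^o => Some z) @` S).

Definition unit_seg_inf : set (one_point_compactification R[i]^o) :=
  [set p | exists r : R, 0 <= r <= 1 /\ p = Some (r%:C%C : R[i]^o)].

Definition supp (v : Omega -> R) : set Omega := closure [set x | v x != 0].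

Definition dual_elt {X : tvsType R[i]} (e : X -> R[i]) : Prop :=
  (forall (c : R[i]) (x y : X), e (c *: x + y) = c * e x + e y) /\
  continuous (e : X -> R[i]^o).

Definition Lebesgue_le {X : tvsType R[i]} (h : Omega -> X) (S : set Omega)
  (e : X -> R[i]) (a : R) : set Omega := [set x | S x /\ complex.Re (e (h x)) <= a].
Definition Lebesgue_ge {X : tvsType R[i]} (h : Omega -> X) (S : set Omega)
  (e : X -> R[i]) (b : R) : set Omega := [set x | S x /\ b <= complex.Re (e (h x))].

Definition separates_Lebesgue {X : tvsType R[i]} (A : set (Omega -> R[i]))
  (h : Omega -> X) (S : set Omega) : Prop :=
  forall e : X -> R[i], dual_elt e -> forall a b : R, a < b ->
    exists2 phi, A phi &
      closC (phi @` Lebesgue_le h S e a) `&` closC (phi @` Lebesgue_ge h S e b)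
        = set0.

Definition zero_set (Z : set Omega) : Prop :=
  exists g : Omega -> R, continuous g /\ Z = g @^-1` [set 0].

Definition z_filter (F : set (set Omega)) : Prop :=
  [/\ (exists Z, F Z),
      (forall Z, F Z -> zero_set Z),
      ~ F set0,
      (forall Z1 Z2, F Z1 -> F Z2 -> F (Z1 `&` Z2)) &
      (forall Z1 Z2, F Z1 -> zero_set Z2 -> Z1 `<=` Z2 -> F Z2)].

Definition antisymmetric (A : set (Omega -> R[i])) (v : Omega -> R)
  (F : set (set Omega)) : Prop :=
  (forall Z, F Z -> Z `&` supp v !=set0) /\
  (forall phi, A phi ->
     \bigcap_(Z in F) closCinf (phi @` (Z `&` supp v)) `<=` unit_seg_inf ->
     exists p, \bigcap_(Z in F) closCinf (phi @` (Z `&` supp v)) = [set p]).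

Definition beta_separates_Lebesgue {X : tvsType R[i]} (A : set (Omega -> R[i]))
  (h : Omega -> X) (v : Omega -> R) : Prop :=
  forall F : set (set Omega), z_filter F -> antisymmetric A v F ->
  forall e : X -> R[i], dual_elt e -> forall a b : R, a < b ->
    exists2 Z, F Z &
      (Z `&` Lebesgue_le h (supp v) e a = set0 \/
       Z `&` Lebesgue_ge h (supp v) e b = set0).

Definition sub_C01 (A : set (Omega -> R[i])) : Prop :=
  forall phi, A phi -> Ccontinuous phi /\
    forall x, exists r : R, 0 <= r <= 1 /\ phi x = r%:C%C.

Definition selfadjoint_subalgebra (A : set (Omega -> R[i])) : Prop :=
  (forall phi, A phi -> Ccontinuous phi) /\
  [/\ A (fun _ => 0),
      (forall phi psi, A phi -> A psi -> A (fun x => phi x + psi x)),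
      (forall phi psi, A phi -> A psi -> A (fun x => phi x * psi x)),
      (forall (c : R[i]) phi, A phi -> A (fun x => c * phi x)) &
      (forall phi, A phi -> A (fun x => (phi x)^*))].

End Defs.

(* Main.v *)
Require Import Defs.
From HB Require Import structures.
From mathcomp Require Import all_boot all_order all_algebra.
From mathcomp Require Import all_classical all_reals all_analysis.
From mathcomp.real_closed Require Import complex.
Import Order.TTheory GRing.Theory Num.Theory.
Import numFieldNormedType.Exports.
Local Open Scope classical_set_scope.
Local Open Scope ring_scope.
From mathcomp Require Import ring lra.
Lemma closure_img {T U : topologicalType} (f : T -> U) (S : set T) x :
  continuous f -> closure S x -> closure (f @` S) (f x).
Proof.
move=> fc Sx B /fc fB; have [y [Sy By]] := Sx _ fB.
by exists (f y); split => //; exists y.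
Qed.

Lemma rc_continuous (R : realType) : continuous (fun r : R => (r%:C)%C : R[i]^o).
Proof.
move=> x; apply/cvgrPdist_lt => e e0.
have Ime : complex.Im e = 0 by move: e0; rewrite ltcE => /andP[/eqP -> _].
have Ree : 0 < complex.Re e by move: e0; rewrite ltcE => /andP[_].
near=> y.
have : `|x - y| < complex.Re e by near: y; apply: cvgr_dist_lt.
rewrite -(rmorphB (real_complex R)) normc_def /= expr0n /= addr0 sqrtr_sqr.
by move=> h; rewrite ltcE /= Ime eqxx h.
Unshelve. all: by end_near.
Qed.

Lemma fst_continuous {T U : topologicalType} : continuous (@fst T U).
Proof. by move=> [a b]; exact: cvg_fst. Qed.
Lemma snd_continuous {T U : topologicalType} : continuous (@snd T U).
Proof. by move=> [a b]; exact: cvg_snd. Qed.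

Lemma psi_continuous (R : realType) :
  continuous (fun p : R * R => ((p.1)%:C + 'i * (p.2)%:C)%C : R[i]^o).
Proof.
move=> p.
apply: cvgD.
  exact: (continuous_comp (@fst_continuous R R p) (@rc_continuous R p.1)).
apply: cvgM; first exact: cvg_cst.
exact: (continuous_comp (@snd_continuous R R p) (@rc_continuous R p.2)).
Qed.

Lemma opc_closure_fwd {T : topologicalType} (S : set T) z :
  closure S z -> closure (Some @` S : set (one_point_compactification T)) (Some z).
Proof. exact/closure_img/one_point_compactification_some_continuous. Qed.

Lemma opc_closure_back {T : topologicalType} (S : set T) z :
  closure (Some @` S : set (one_point_compactification T)) (Some z) -> closure S z.
Proof.
move=> h B Bz.
have [_ [[a Sa <-] [b Bb [eab]]]] := h _ (@one_point_compactification_some_nbhs T z B Bz).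
by exists a; split => //; rewrite -eab.
Qed.

Section Seg.
Context {R : realType}.
Definition Kseg : set R[i]^o := (fun r : R => (r%:C)%C : R[i]^o) @` `[0, 1].

Lemma Kseg_compact : compact Kseg.
Proof.
apply: continuous_compact; last exact: segment_compact.
exact/continuous_subspaceT/rc_continuous.
Qed.

Lemma Kseg_closed : closed Kseg.
Proof. exact: (compact_closed (@norm_hausdorff _ _) Kseg_compact). Qed.

Lemma closCinf_seg (S : set R[i]) :
  S `<=` Kseg -> closCinf S `<=` unit_seg_inf.
Proof.
move=> SK [z|] /= hz.
  have := @opc_closure_back R[i]^o S z hz => /(@closureS R[i]^o _ _ SK).
  rewrite -(closure_id _).1; last exact: Kseg_closed.
  move=> [r r01 <-]; exists r; split; last by [].
  by move: r01; rewrite /= in_itv.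
exfalso.
have NB : @nbhs _ (one_point_compactification R[i]^o) None
   ((Some @` (~` Kseg)) `|` [set None]).
  exists Kseg => //; split; [exact: Kseg_compact | exact: Kseg_closed].
have [_ [[s Ss <-] [[u nKu [eu]]|//]]] := hz _ NB.
by apply: nKu; rewrite eu; exact: SK.
Qed.
End Seg.

Lemma cubeq (R : realType) (sa sb : R) : sa * sa = sb * sb -> sa*sa*sa = sb*sb*sb -> sa = sb.
Proof.
move=> h1 h2.
have e : (sa - sb) * (sa + sb) = 0.
  have -> : (sa - sb)*(sa+sb) = sa*sa - sb*sb by ring.
  by rewrite h1 subrr.
move/eqP: e; rewrite mulf_eq0 => /orP[/eqP|] e; first exact: subr0_eq.
move: e; rewrite addr_eq0 => /eqP ea; subst sa.
have t0 : sb * sb * sb = 0.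
  have : - (sb * sb * sb) = (-sb) * (-sb) * (-sb) by ring.
  rewrite h2; lra.
move/eqP: t0; rewrite !mulf_eq0 !orbb => /eqP ->; by rewrite oppr0.
Qed.

Lemma closure_img_comp {T : Type} {U W : topologicalType} (G : T -> U) (f : U -> W)
  (X : set T) q : continuous f -> closure (G @` X) q ->
  closure ((fun x => f (G x)) @` X) (f q).
Proof.
move=> fc /(@closure_img _ _ f _ _ fc); apply: closureS => _ [_ [x Xx <-] <-].
by exists x.
Qed.

Lemma normc_bound (R : realType) (z : R[i]) (M : R) :
  `|z| <= (M%:C)%C -> `|complex.Re z| <= M /\ `|complex.Im z| <= M.
Proof.
rewrite normc_def lecR => h; split; apply: le_trans h;
  rewrite -sqrtr_sqr; apply: ler_wsqrtr.
  by rewrite lerDl sqr_ge0.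
by rewrite lerDr sqr_ge0.
Qed.

Section Core.
Context {R : realType} {Omega : topologicalType}.
Variables (A : set (Omega -> R[i])) (v : Omega -> R) (F : set (set Omega)).

Definition mC (r : R) : one_point_compactification R[i]^o := Some ((r%:C)%C : R[i]^o).

Lemma mC_continuous : continuous mC.
Proof.
move=> r; exact: (continuous_comp (@rc_continuous R r)
  (@one_point_compactification_some_continuous R[i]^o _)).
Qed.

Lemma core (psi : Omega -> R[i]) (k : Omega -> R) (La Lb : set Omega) (ta tb : R) :
  A psi -> Defs.antisymmetric A v F -> (exists Z, F Z) ->
  (forall x, supp v x -> psi x = ((k x)%:C)%C /\ 0 <= k x <= 1) ->
  La `<=` supp v -> Lb `<=` supp v ->
  (forall Z, F Z -> closure (k @` (Z `&` La)) ta) ->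
  (forall Z, F Z -> closure (k @` (Z `&` Lb)) tb) -> ta = tb.
Proof.
move=> Apsi anti [Z0 FZ0] psiE sLa sLb Ha Hb.
have inI : forall t L, L `<=` supp v ->
    (forall Z, F Z -> closure (k @` (Z `&` L)) t) ->
    (\bigcap_(Z in F) closCinf (psi @` (Z `&` supp v))) (mC t).
  move=> t L sL H Z FZ; have := @closure_img _ _ mC _ _ mC_continuous (H Z FZ).
  apply: closureS => _ [_ [x [Zx Lx] <-] <-].
  exists (psi x); first by exists x => //; split => //; exact: sL.
  by rewrite /mC (psiE x (sL x Lx)).1.
have sub : \bigcap_(Z in F) closCinf (psi @` (Z `&` supp v)) `<=` unit_seg_inf.
  move=> y Hy; apply: (@closCinf_seg R (psi @` (Z0 `&` supp v)) _ y (Hy Z0 FZ0)).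
  move=> _ [x [_ sx] <-]; have [-> k01] := psiE x sx.
  by exists (k x) => //=; rewrite in_itv.
have [p Hp] := anti.2 psi Apsi sub.
have ha := inI ta La sLa Ha; have hb := inI tb Lb sLb Hb.
rewrite Hp /= in ha hb.
by move: ha; rewrite -hb /mC => -[].
Qed.
End Core.

Section Qalg.
Context {R : realType} {Omega : topologicalType}.
Variables (A : set (Omega -> R[i])) (v : Omega -> R) (F : set (set Omega)).

Lemma poly_cont (c d : R) : continuous (fun s : R => c * (s * s * s) + d * (s * s)).
Proof.
move=> s; apply: cvgD; apply: cvgM; try exact: cvg_cst;
  repeat apply: cvgM; exact: cvg_id.
Qed.

Lemma Qalg (g : Omega -> R) (r : Omega -> R[i]) (K : R) (La Lb : set Omega) :
  Defs.antisymmetric A v F -> (exists Z, F Z) ->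
  0 < K -> A r ->
  (forall phi psi, A phi -> A psi -> A (fun x => phi x + psi x)) ->
  (forall phi psi, A phi -> A psi -> A (fun x => phi x * psi x)) ->
  (forall (c : R[i]) phi, A phi -> A (fun x => c * phi x)) ->
  (forall x, supp v x -> r x = ((g x)%:C)%C /\ -K <= g x <= K) ->
  La `<=` supp v -> Lb `<=` supp v ->
  forall sa sb, (forall Z, F Z -> closure (g @` (Z `&` La)) sa) ->
  (forall Z, F Z -> closure (g @` (Z `&` Lb)) sb) -> sa = sb.
Proof.
move=> anti F0 K0 Ar Aadd Amul Ascal rE sLa sLb sa sb Ha Hb.
pose c1 : R := (K * K)^-1.
pose c2 : R := (2 * (K * K * K))^-1.
have KK0 : 0 < K * K by rewrite mulr_gt0.
have KKK0 : 0 < 2 * (K * K * K) by rewrite !mulr_gt0.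
have Ar2 : A (fun x => r x * r x) := Amul _ _ Ar Ar.
have Ar3 : A (fun x => r x * r x * r x) := Amul _ _ Ar2 Ar.
have A1 : A (fun x => (0%:C)%C * (r x * r x * r x) + (c1%:C)%C * (r x * r x))
  := Aadd _ _ (Ascal _ _ Ar3) (Ascal _ _ Ar2).
have A2 : A (fun x => (c2%:C)%C * (r x * r x * r x) + ((c2 * K)%:C)%C * (r x * r x))
  := Aadd _ _ (Ascal _ _ Ar3) (Ascal _ _ Ar2).
have gen : forall c d : R, A (fun x => (c%:C)%C * (r x * r x * r x) + (d%:C)%C * (r x * r x)) ->
    (forall s : R, -K <= s <= K -> 0 <= c * (s * s * s) + d * (s * s) <= 1) ->
    c * (sa * sa * sa) + d * (sa * sa) = c * (sb * sb * sb) + d * (sb * sb).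
  move=> c d Acd bd.
  apply: (@core _ _ A v F _ _ _ _ _ _ Acd anti F0 _ sLa sLb
    (fun Z FZ => @closure_img_comp _ _ _ g _ _ _ (poly_cont c d) (Ha Z FZ))
    (fun Z FZ => @closure_img_comp _ _ _ g _ _ _ (poly_cont c d) (Hb Z FZ))).
  move=> x sx; have [-> gb] := rE x sx; split; last exact: bd.
  by rewrite !rmorphD !rmorphM.
have e1 := gen 0 c1 A1 _.
have e2 := gen c2 (c2 * K) A2 _.
have c1n0 : c1 != 0 by rewrite invr_eq0 gt_eqF.
have s2 : sa * sa = sb * sb.
  apply: (mulfI c1n0); move: e1; rewrite !mul0r !add0r; apply.
  move=> s /andP[s1 s2]; rewrite mul0r add0r mulrC; apply/andP; split.
    by rewrite divr_ge0 // ?mul_ge0 // ?sqr_ge0 // ltW.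
  by rewrite ler_pdivrMr // mul1r; nra.
apply: cubeq => //.
have c2n0 : c2 != 0 by rewrite invr_eq0 gt_eqF.
apply: (mulfI c2n0); apply: (addIr (c2 * K * (sb * sb))).
rewrite -{1}s2; apply: e2.
move=> s /andP[s1 s2'].
have -> : c2 * (s * s * s) + c2 * K * (s * s) = (s * s * (s + K)) / (2 * (K * K * K)) by rewrite /c2; ring.
have ss0 : 0 <= s * s by nra.
have sK0 : 0 <= s + K by lra.
have ssK : s * s <= K * K by nra.
have sK2 : s + K <= 2 * K by lra.
apply/andP; split.
  by apply: divr_ge0; [apply: mulr_ge0 | apply: ltW].
rewrite ler_pdivrMr // mul1r.
have -> : 2 * (K * K * K) = (K * K) * (2 * K) by ring.
by apply: ler_pM.
Qed.
End Qalg.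

Lemma cluster_pt {R : realType} {T : Type} (F : set (set T)) (L : set T)
  (G : T -> R * R) (K : R) :
  (exists Z, F Z) -> (forall Z1 Z2, F Z1 -> F Z2 -> F (Z1 `&` Z2)) ->
  (forall Z, F Z -> Z `&` L !=set0) ->
  (forall x, L x -> -K <= (G x).1 <= K /\ -K <= (G x).2 <= K) ->
  exists q, forall Z, F Z -> closure (G @` (Z `&` L)) q.
Proof.
move=> [Z0 FZ0] FI ne bd.
pose H := filter_from F (fun Z => Z `&` L).
have HF : ProperFilter H.
  apply: filter_from_proper; last exact: ne.
  apply: filter_from_filter; first by exists Z0.
  move=> Z1 Z2 F1 F2; exists (Z1 `&` Z2); first exact: FI.
  by move=> x [[z1 z2] lx]; split; split.
have cpt : compact (`[-K, K] `*` `[-K, K] : set (R * R)).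
  by apply: compact_setX; exact: segment_compact.
have GS : (G @ H) (`[-K, K] `*` `[-K, K]).
  exists Z0 => // x [_ Lx]; have [b1 b2] := bd x Lx.
  by split; rewrite /= in_itv.
have [q [_ cq]] := cpt (G @ H) (fmap_proper_filter _ HF) GS.
exists q => Z FZ B Bq; apply: cq Bq.
by exists Z => // x zx; exists x.
Qed.

Theorem lemma3p7 (R : realType) (Omega : topologicalType) (X : tvsType R[i])
  (v : Omega -> R) (f : Omega -> X) (A : set (Omega -> R[i])) (h : Omega -> X) :
  (forall x, 0 <= v x) ->
  (h = (fun x => (v x)%:C%C *: f x) \/ h = f) ->
  {within supp v, continuous h} ->
  (sub_C01 A \/
   (selfadjoint_subalgebra A /\
    (forall phi, A phi -> exists M : R, forall x, supp v x -> `|phi x| <= M%:C%C))) ->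
  separates_Lebesgue A h (supp v) ->
  beta_separates_Lebesgue A h v.
Proof.
move=> _ _ _ Acase sep F zF anti e de a b ab.
set La := Lebesgue_le h (supp v) e a; set Lb := Lebesgue_ge h (supp v) e b.
case: (pselect (exists2 Z, F Z & (Z `&` La = set0 \/ Z `&` Lb = set0))) => // nex.
exfalso.
have neA : forall Z, F Z -> Z `&` La !=set0.
  move=> Z FZ; apply/set0P/eqP => h0; apply: nex; exists Z => //; left; exact: h0.
have neB : forall Z, F Z -> Z `&` Lb !=set0.
  move=> Z FZ; apply/set0P/eqP => h0; apply: nex; exists Z => //; right; exact: h0.
have [phi Aphi sepphi] := sep e de a b ab.
have sLa : La `<=` supp v by move=> x [].
have sLb : Lb `<=` supp v by move=> x [].
case: zF => F0 _ _ FI _.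
pose g1 := fun x => complex.Re (phi x).
pose g2 := fun x => complex.Im (phi x).
pose Qp := fun g : Omega -> R => forall sa sb,
  (forall Z, F Z -> closure (g @` (Z `&` La)) sa) ->
  (forall Z, F Z -> closure (g @` (Z `&` Lb)) sb) -> sa = sb.
have [K [bd1 bd2 Q1 Q2]] : exists K : R, [/\ 
   forall x, supp v x -> -K <= g1 x <= K,
   forall x, supp v x -> -K <= g2 x <= K, Qp g1 & Qp g2].
  have F0' := F0.
  case: Acase => [HC|[[_ [_ Aadd Amul Ascal Aconj]] Abd]].
    have phiE : forall x, exists r : R, 0 <= r <= 1 /\ phi x = (r%:C)%C
      := (HC phi Aphi).2.
    have g2E : forall x, g2 x = 0 by move=> x; rewrite /g2; have [r [_ ->]] := phiE x.
    exists 1; split.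
    - move=> x _; rewrite /g1; have [r [/andP[r0 r1] ->]] := phiE x.
      by rewrite /=; apply/andP; split; lra.
    - by move=> x _; rewrite g2E; apply/andP; split; lra.
    - move=> sa sb Ha Hb.
      apply: (@core _ _ A v F phi g1 La Lb sa sb Aphi anti F0 _ sLa sLb Ha Hb).
      by move=> x _; rewrite /g1; have [r [r01 ->]] := phiE x.
    - have c0 : forall s Z L, closure (g2 @` (Z `&` L)) s -> s = 0.
        move=> s Z L /(@closureS R _ [set 0]) cl.
        have : closure [set (0:R)] s by apply: cl => _ [x _ <-]; rewrite g2E.
        have cl0 : closed [set (0:R)].
          by apply: accessible_closed_set1; apply: hausdorff_accessible; exact: Rhausdorff.
        by rewrite -(closure_id _).1.
      move=> sa sb Ha Hb; have [Z0 FZ0] := F0'.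
      by rewrite (c0 _ _ _ (Ha Z0 FZ0)) (c0 _ _ _ (Hb Z0 FZ0)).
  have [M HM] := Abd phi Aphi.
  have K0 : 0 < `|M| + 1 by rewrite ltr_wpDl.
  have bd : forall x, supp v x -> (-(`|M| + 1) <= g1 x <= `|M| + 1) /\
                                  (-(`|M| + 1) <= g2 x <= `|M| + 1).
    move=> x sx; have [h1 h2] := @normc_bound R _ _ (HM x sx).
    have hM : M <= `|M| := ler_norm M.
    move: h1 h2; rewrite !ler_norml => /andP[h1 h1'] /andP[h2 h2'].
    by split; apply/andP; split; rewrite /g1 /g2; lra.
  exists (`|M| + 1); split.
  - by move=> x sx; have [] := bd x sx.
  - by move=> x sx; have [] := bd x sx.
  - apply: (@Qalg R Omega A v F g1 (fun x => (2%:R^-1) * (phi x + (phi x)^*))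
      _ La Lb anti F0 K0 (Ascal _ _ (Aadd _ _ Aphi (Aconj _ Aphi))) Aadd Amul Ascal _ sLa sLb).
    move=> x sx; split; last by have [] := bd x sx.
    by rewrite /g1 ReJ_add mulrC.
  - apply: (@Qalg R Omega A v F g2 (fun x => ('i%C / 2%:R) * ((phi x)^* + (-1) * phi x))
      _ La Lb anti F0 K0 (Ascal _ _ (Aadd _ _ (Aconj _ Aphi) (Ascal (-1) _ Aphi)))
      Aadd Amul Ascal _ sLa sLb).
    move=> x sx; split; last by have [] := bd x sx.
    rewrite /g2 ImJ_sub mulN1r; ring.
pose G := fun x => (g1 x, g2 x).
have [qa Ha] := @cluster_pt R _ F La G K F0 FI neA
  (fun x Lx => conj (bd1 x (sLa x Lx)) (bd2 x (sLa x Lx))).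
have [qb Hb] := @cluster_pt R _ F Lb G K F0 FI neB
  (fun x Lx => conj (bd1 x (sLb x Lx)) (bd2 x (sLb x Lx))).
have e1 : qa.1 = qb.1.
  apply: Q1 => Z FZ.
    exact: (@closure_img_comp _ _ _ G _ _ _ fst_continuous (Ha Z FZ)).
  exact: (@closure_img_comp _ _ _ G _ _ _ fst_continuous (Hb Z FZ)).
have e2 : qa.2 = qb.2.
  apply: Q2 => Z FZ.
    exact: (@closure_img_comp _ _ _ G _ _ _ snd_continuous (Ha Z FZ)).
  exact: (@closure_img_comp _ _ _ G _ _ _ snd_continuous (Hb Z FZ)).
have qab : qa = qb by case: qa qb e1 e2 {Ha Hb} => ? ? [? ?] /= -> ->.
have [Z0 FZ0] := F0.
pose Psi := fun p : R * R => ((p.1)%:C + 'i * (p.2)%:C)%C : R[i]^o.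
have PsiG : forall x, Psi (G x) = phi x by move=> x; rewrite /Psi /= -complexE.
have inC : forall L q, closure (G @` (Z0 `&` L)) q -> closC (phi @` L) (Psi q).
  move=> L q /(@closure_img_comp _ _ _ G _ _ _ (@psi_continuous R)).
  by apply: closureS => _ [x [_ Lx] <-]; exists x => //; rewrite -(PsiG x).
have : (closC (phi @` La) `&` closC (phi @` Lb)) (Psi qa).
  by split; [exact: inC (Ha Z0 FZ0) | rewrite qab; exact: inC (Hb Z0 FZ0)].
by rewrite sepphi.
Qed.
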